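(* Let $X\subseteq V_\Delta$ be finite such that $G_X$ is connected and $X$ has no holes. Let $P$ be a portal (for some axis) and let $u,v\in X\setminus P$. A shortest path from $u$ to $v$ in $G_X$ traverses (contains a node of) $P$ if and only if $u$ and $v$ are not in the same connected component of the subgraph of $G_X$ induced by $X\setminus P$.
   Context: $G_\Delta=(V_\Delta,E_\Delta)$ is the infinite regular triangular grid graph; its edges are parallel to one of three axes $x,y,z$. For finite $X\subseteq V_\Delta$, $G_X$ is the subgraph of $G_\Delta$ induced by $X$; $X$ has no holes if the subgraph of $G_\Delta$ induced by $V_\Delta\setminus X$ is connected. For an axis $d$, let $E_d$ be the set of edges of $G_X$ parallel to $d$; the $d$-portals are the vertex sets of the connected components of $(X,E_d)$. A portal is a $d$-portal for some axis $d$. *)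

(* Defs.v *)
(* Triangular grid G_Delta in axial coordinates on Z x Z. *)
From mathcomp Require Import all_boot all_order all_algebra.
From mathcomp Require Import finmap.
Set Implicit Arguments. Unset Strict Implicit. Unset Printing Implicit Defensive.
Import GRing.Theory Num.Theory.
Local Open Scope ring_scope.


Definition vertex := (int * int)%type.

Inductive axis := AxX | AxY | AxZ.

Definition dir (d : axis) : vertex :=
  match d with AxX => (1, 0) | AxY => (0, 1) | AxZ => (1, -1) end.

Definition adj_axis (d : axis) (a b : vertex) : Prop :=
  (b.1 = a.1 + (dir d).1 /\ b.2 = a.2 + (dir d).2) \/
  (a.1 = b.1 + (dir d).1 /\ a.2 = b.2 + (dir d).2).

Definition adj (a b : vertex) : Prop := exists d, adj_axis d a b.

Fixpoint walk (S : vertex -> Prop) (E : vertex -> vertex -> Prop)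
    (x : vertex) (s : seq vertex) : Prop :=
  match s with
  | [::] => True
  | y :: s' => E x y /\ S y /\ walk S E y s'
  end.

(* the vertex sequence u :: s is a path (walk) from u to v in the graph
   with vertex set S and edge relation E (induced by S); its length is size s *)
Definition path_in (S : vertex -> Prop) (E : vertex -> vertex -> Prop)
    (u : vertex) (s : seq vertex) (v : vertex) : Prop :=
  S u /\ walk S E u s /\ last u s = v.

Definition connected_in (S : vertex -> Prop) (E : vertex -> vertex -> Prop)
    (u v : vertex) : Prop :=
  exists s, path_in S E u s v.

Definition inX (X : {fset vertex}) : vertex -> Prop := fun x => x \in X.

Definition GX_connected (X : {fset vertex}) : Prop :=
  forall u v, u \in X -> v \in X -> connected_in (inX X) adj u v.

Definition no_holes (X : {fset vertex}) : Prop :=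
  forall a b, a \notin X -> b \notin X ->
    connected_in (fun x => x \notin X) adj a b.

Definition is_d_portal (X : {fset vertex}) (d : axis) (P : {fset vertex}) : Prop :=
  exists x, x \in X /\
    forall y, y \in P <-> connected_in (inX X) (adj_axis d) x y.

Definition is_portal (X : {fset vertex}) (P : {fset vertex}) : Prop :=
  exists d, is_d_portal X d P.

Definition shortest_path (X : {fset vertex}) (u : vertex) (s : seq vertex)
    (v : vertex) : Prop :=
  path_in (inX X) adj u s v /\
  forall t, path_in (inX X) adj u t v -> (size s <= size t)%N.

(* Main.v *)
Require Import Defs.
From mathcomp Require Import all_boot all_order all_algebra.
From mathcomp Require Import finmap zify.
Set Implicit Arguments. Unset Strict Implicit. Unset Printing Implicit Defensive.
Import GRing.Theory Num.Theory.

Section Dev.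
Local Open Scope ring_scope.

Definition step (ta la tb lb : int) : Prop :=
  (tb = ta + 1 /\ lb = la) \/ (ta = tb + 1 /\ lb = la) \/
  (tb = ta /\ lb = la + 1) \/ (tb = ta /\ la = lb + 1) \/
  (tb = ta + 1 /\ la = lb + 1) \/ (ta = tb + 1 /\ lb = la + 1).

Record csys (d : axis) := CSys {
  ct : vertex -> int; cl : vertex -> int; cu : int -> int -> vertex;
  ct_u : forall t l, ct (cu t l) = t;
  cl_u : forall t l, cl (cu t l) = l;
  cu_K : forall v, cu (ct v) (cl v) = v;
  adjE : forall a b, adj a b <-> step (ct a) (cl a) (ct b) (cl b);
  axE : forall a b, adj_axis d a b <->
     (cl b = cl a /\ (ct b = ct a + 1 \/ ct a = ct b + 1))
}.

Lemma adj_unfold (a b : vertex) : adj a b <->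
  adj_axis AxX a b \/ adj_axis AxY a b \/ adj_axis AxZ a b.
Proof.
split; first by case=> [[]] H; tauto.
by case=> [H|[H|H]]; eexists; exact H.
Qed.

Ltac crunch := move=> [a1 a2] [b1 b2]; rewrite ?adj_unfold /adj_axis /step /=; split; lia.

Definition csX : csys AxX.
refine (@CSys AxX (fun v => v.1) (fun v => v.2) (fun t l => (t, l)) _ _ _ _ _).
- by [].
- by [].
- by case.
- crunch.
- crunch.
Defined.

Definition csY : csys AxY.
refine (@CSys AxY (fun v => v.2) (fun v => v.1) (fun t l => (l, t)) _ _ _ _ _).
- by [].
- by [].
- by case.
- crunch.
- crunch.
Defined.

Definition csZ : csys AxZ.
refine (@CSys AxZ (fun v => - v.2) (fun v => v.1 + v.2) (fun t l => (l + t, - t)) _ _ _ _ _).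
- move=> t l /=; lia.
- move=> t l /=; lia.
- case=> a b /=; congr pair; lia.
- crunch.
- crunch.
Defined.

Definition csD (d : axis) : csys d :=
  match d with AxX => csX | AxY => csY | AxZ => csZ end.

Definition csR d (K : csys d) : csys d.
refine (@CSys d (fun v => - ct K v) (fun v => - cl K v) (fun t l => cu K (-t) (-l)) _ _ _ _ _).
- move=> t l /=; rewrite ct_u; lia.
- move=> t l /=; rewrite cl_u; lia.
- move=> v /=; rewrite !opprK; exact: cu_K.
- move=> a b; rewrite (adjE K) /step; lia.
- move=> a b; rewrite (axE K); lia.
Defined.


Section Walks.
Variables (S : vertex -> Prop) (E : vertex -> vertex -> Prop).

Lemma walk_cat a s1 s2 : walk S E a (s1 ++ s2) <-> walk S E a s1 /\ walk S E (last a s1) s2.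
Proof.
elim: s1 a => [|b s1 IH] a /=; first by split; [move=> H; split | case].
rewrite IH; tauto.
Qed.

Lemma walk_mem a s : walk S E a s -> forall w, w \in s -> S w.
Proof.
elim: s a => [|b s IH] a //= [_ [Sb W]] w; rewrite inE => /orP [/eqP->//|].
exact: IH W w.
Qed.

Lemma walk_E a s : walk S E a s -> forall S' : vertex -> Prop,
  (forall w, w \in s -> S' w) -> walk S' E a s.
Proof.
elim: s a => [|b s IH] a //= [Eab [Sb W]] S' HS; split=> //; split.
  by apply: HS; rewrite inE eqxx.
by apply: IH => // w ws; apply: HS; rewrite inE ws orbT.
Qed.

Hypothesis Esym : forall a b, E a b -> E b a.

Lemma conn_sym a b : connected_in S E a b -> connected_in S E b a.
Proof.
case=> s; elim: s a => [|y s IH] a [Sa [W L]] /=.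
  by rewrite /= in L; subst; exists [::]; split.
case: W => [Eay [Sy W]]; rewrite /= in L.
case: (IH y (conj Sy (conj W L))) => t [Sb [Wt Lt]].
exists (rcons t a); split=> //; split.
  by rewrite -cats1 walk_cat Lt /=; split=> //; split=> //; apply: Esym.
by rewrite last_rcons.
Qed.

Lemma conn_trans a b c : connected_in S E a b -> connected_in S E b c ->
  connected_in S E a c.
Proof.
case=> s [Sa [Ws Ls]] [t [Sb [Wt Lt]]]; exists (s ++ t); split=> //; split.
  by rewrite walk_cat Ls.
by rewrite last_cat Ls.
Qed.
End Walks.

Lemma mem_head_b (a b : vertex) s : b \in a :: b :: s.
Proof. by rewrite !inE eqxx orbT. Qed.

Section Psi.
Variables (d : axis) (K : csys d).
Local Notation ct := (ct K).
Local Notation cl := (cl K).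
Local Notation cu := (cu K).

Lemma cuE t l w : ct w = t -> cl w = l -> cu t l = w.
Proof. by move=> <- <-; rewrite cu_K. Qed.

Lemma neq_cu a t l : a <> cu t l -> ~ (ct a = t /\ cl a = l).
Proof. by move=> H [H1 H2]; apply: H; symmetry; apply: cuE. Qed.

Definition cr (l t : int) (a b : vertex) : int :=
  (if (cl a == l) && (cl b == l + 1) && (t < ct a) then 1 else 0) -
  (if (cl b == l) && (cl a == l + 1) && (t < ct b) then 1 else 0).

Fixpoint psi l t a s : int :=
  match s with [::] => 0 | b :: s' => cr l t a b + psi l t b s' end.

Definition gg (l t : int) (v : vertex) : int :=
  if (cl v == l + 1) && (t < ct v) then 1 else 0.

Lemma psi_cat l t a s1 s2 : psi l t a (s1 ++ s2) = psi l t a s1 + psi l t (last a s1) s2.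
Proof. by elim: s1 a => [|b s1 IH] a /=; [rewrite add0r | rewrite IH addrA]. Qed.

Ltac ifcrunch := rewrite /cr /gg; repeat case: ifP; move=> *; lia.

Lemma cr_H l t a b : a <> cu (t + 1) l -> b <> cu (t + 1) l ->
  cr l t a b = cr l (t + 1) a b.
Proof. move=> /neq_cu Ha /neq_cu Hb; ifcrunch. Qed.

Lemma psi_H l t a s : (forall w, w \in a :: s -> w <> cu (t + 1) l) ->
  psi l t a s = psi l (t + 1) a s.
Proof.
elim: s a => [|b s IH] a //= H.
rewrite cr_H ?IH //; try (by move=> w ws; apply: H; rewrite inE ws orbT);
 by apply: H; rewrite !inE eqxx ?orbT.
Qed.

Lemma cr_V l t a b : adj a b -> a <> cu t (l + 1) -> b <> cu t (l + 1) ->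
  cr l t a b - cr (l + 1) t a b = gg l t b - gg l t a.
Proof.
rewrite (adjE K) /step => Hab /neq_cu Ha /neq_cu Hb.
rewrite /cr /gg; repeat case: ifP; move=> *; lia.
Qed.

Lemma psi_V_gen S l t a s : walk S adj a s ->
  (forall w, w \in a :: s -> w <> cu t (l + 1)) ->
  psi l t a s - psi (l + 1) t a s = gg l t (last a s) - gg l t a.
Proof.
elim: s a => [|b s IH] a /=; first by move=> *; rewrite !subrr.
case=> [Eab [_ W]] H.
have H1 : forall w, w \in b :: s -> w <> cu t (l + 1).
  by move=> w ws; apply: H; rewrite inE ws orbT.
have := IH b W H1.
have := cr_V Eab (H a (mem_head _ _)) (H1 b (mem_head _ _)).
lia.
Qed.

Lemma psi_V S l t a s : walk S adj a s -> last a s = a ->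
  (forall w, w \in a :: s -> w <> cu t (l + 1)) ->
  psi l t a s = psi (l + 1) t a s.
Proof. move=> W L H; have := psi_V_gen W H; rewrite L; lia. Qed.

Lemma psi_adj S a s v w : walk S adj a s -> last a s = a ->
  v \notin a :: s -> w \notin a :: s -> adj v w ->
  psi (cl v) (ct v) a s = psi (cl w) (ct w) a s.
Proof.
move=> W L Hv Hw.
have nv : forall x, x \in a :: s -> x <> v by move=> x xs xv; subst; rewrite xs in Hv.
have nw : forall x, x \in a :: s -> x <> w by move=> x xs xv; subst; rewrite xs in Hw.
rewrite (adjE K) /step.
case=> [[E1 E2]|[[E1 E2]|[[E1 E2]|[[E1 E2]|[[E1 E2]|[E1 E2]]]]]].
- rewrite E1 E2 psi_H // => x /nw H; rewrite (@cuE _ _ w) //; lia.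
- rewrite E1 -E2 -psi_H // => x /nv H; rewrite (@cuE _ _ v) //; lia.
- rewrite E1 E2 (psi_V W L) // => x /nw H; rewrite (@cuE _ _ w) //; lia.
- rewrite E1 E2 -(psi_V W L) // => x /nv H; rewrite (@cuE _ _ v) //; lia.
- rewrite E1 E2.
  have h1 : psi (cl w + 1) (ct v) a s = psi (cl w) (ct v) a s.
    by symmetry; apply: (psi_V W L) => x /nv H; rewrite (@cuE _ _ v) //; lia.
  have h2 : psi (cl w) (ct v) a s = psi (cl w) (ct v + 1) a s.
    by apply: psi_H => x /nw H; rewrite (@cuE _ _ w) //; lia.
  by rewrite h1 h2.
- rewrite E1 E2.
  have h1 : psi (cl v) (ct w) a s = psi (cl v) (ct w + 1) a s.
    by apply: psi_H => x /nv H; rewrite (@cuE _ _ v) //; lia.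
  have h2 : psi (cl v) (ct w) a s = psi (cl v + 1) (ct w) a s.
    by apply: (psi_V W L) => x /nw H; rewrite (@cuE _ _ w) //; lia.
  by rewrite -h1 h2.
Qed.



Lemma psi_far l t a s : (forall w, w \in a :: s -> cl w <> l) -> psi l t a s = 0.
Proof.
elim: s a => [|b s IH] a //= H.
rewrite IH; last by move=> w ws; apply: H; rewrite inE ws orbT.
have := H a (mem_head _ _); have := H b (mem_head_b _ _ _).
rewrite /cr; repeat case: ifP; move=> *; lia.
Qed.

Lemma psi_flat l t a s : (forall w, w \in a :: s -> cl w <> l + 1) -> psi l t a s = 0.
Proof.
elim: s a => [|b s IH] a //= H.
rewrite IH; last by move=> w ws; apply: H; rewrite inE ws orbT.
have := H a (mem_head _ _); have := H b (mem_head_b _ _ _).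
rewrite /cr; repeat case: ifP; move=> *; lia.
Qed.

Definition absi (z : int) : int := if 0 <= z then z else - z.

Lemma absi_ge z : z <= absi z /\ 0 <= absi z.
Proof. rewrite /absi; case: ifP; lia. Qed.

Lemma bound_ex (r : seq vertex) : exists B, forall x, x \in r -> cl x < B.
Proof.
elim: r => [|b r [B IH]]; first by exists 0.
exists (absi B + absi (cl b) + 1) => x; rewrite inE.
case: (absi_ge B) (absi_ge (cl b)) => h1 h2 [h3 h4].
case/orP => [/eqP->|xr]; first lia.
have := IH x xr; lia.
Qed.

Lemma psi_zero (X : {fset vertex}) S a s z : no_holes X ->
  walk S adj a s -> last a s = a -> (forall w, w \in a :: s -> w \in X) ->
  z \notin X -> psi (cl z) (ct z) a s = 0.
Proof.
move=> NH W L HX zX.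
case: (bound_ex X) => M ltM.
pose f := cu 0 M.
have fX : f \notin X by apply/negP => /ltM; rewrite /f cl_u; lia.
have notin : forall y, y \notin X -> y \notin a :: s.
  by move=> y yX; apply/negP => /HX; rewrite (negbTE yX).
have -> : psi (cl z) (ct z) a s = psi (cl f) (ct f) a s.
  case: (NH z f zX fX) => r [_ [Wr Lr]].
  elim: r z zX Wr Lr => [|b r IH] z zX /=; first by move=> _ ->.
  case=> [Ezb [bX Wr]] Lr; rewrite (psi_adj W L (notin _ zX) (notin _ bX) Ezb).
  exact: IH.
by apply: psi_far => w /HX /ltM; rewrite /f cl_u; lia.
Qed.

End Psi.

Lemma adj_sym a b : adj a b -> adj b a.
Proof. by case=> dd H; exists dd; rewrite /adj_axis in H *; tauto. Qed.

Lemma axis_adj dd a b : adj_axis dd a b -> adj a b.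
Proof. by exists dd. Qed.

Lemma walk_Emono (S : vertex -> Prop) (E E' : vertex -> vertex -> Prop) a s :
  (forall x y, E x y -> E' x y) -> walk S E a s -> walk S E' a s.
Proof.
move=> HE; elim: s a => [|b s IH] a //= [Eab [Sb W]]; split; [exact: HE|split=>//].
exact: IH.
Qed.

Lemma split_first (P : {fset vertex}) u s : u \notin P ->
  has (fun w => w \in P) s ->
  exists s1 p r, s = s1 ++ p :: r /\ p \in P /\ (forall w, w \in u :: s1 -> w \notin P).
Proof.
elim: s u => [|b s IH] u //= uP /orP [bP|hs].
  exists [::], b, s; split=> //; split=> // w; rewrite inE => /eqP->//.
case: (boolP (b \in P)) => bP.
  exists [::], b, s; split=> //; split=> // w; rewrite inE => /eqP->//.
case: (IH b bP hs) => s1 [p [r [-> [pP H]]]].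
exists (b :: s1), p, r; split=> //; split=> // w; rewrite inE => /orP [/eqP->//|].
exact: H.
Qed.

Lemma last_nonnil (a a' : vertex) r : r != [::] -> last a r = last a' r.
Proof. by case: r. Qed.

Lemma split_last (P : {fset vertex}) r p : p \in P -> last p r \notin P ->
  exists m y n, r = m ++ y :: n /\ last p m \in P /\ (forall w, w \in y :: n -> w \notin P).
Proof.
elim: r p => [|b r IH] p pP /=; first by rewrite pP.
move=> Hl.
case: (boolP (b \in P)) => bP.
  case: (IH b bP Hl) => m [y [n [-> [H1 H2]]]].
  by exists (b :: m), y, n.
case: (boolP (has (fun w => w \in P) r)) => hr.
  case/hasP: hr => w wr wP.
  have rn : r != [::] by case: r wr {IH Hl}.
  case: (IH w wP); first by rewrite (last_nonnil _ b rn).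
  move=> m [y [n [Er [H1 H2]]]].
  have mn : m != [::].
    apply/negP => /eqP mE; move: wr; rewrite Er mE /= => /H2; by rewrite wP.
  exists (b :: m), y, n; split; first by rewrite Er.
  by split=> //=; rewrite (last_nonnil _ w mn).
exists [::], b, r; split=> //; split=> // w; rewrite inE => /orP [/eqP->//|wr].
by apply/negP => wP; move/hasP: hr; apply; exists w.
Qed.

Lemma bound_gen (f : vertex -> int) (r : seq vertex) : exists B, forall x, x \in r -> f x < B.
Proof.
elim: r => [|b r [B IH]]; first by exists 0.
exists (absi B + absi (f b) + 1) => x; rewrite inE.
case: (absi_ge B) (absi_ge (f b)) => h1 h2 [h3 h4].
case/orP => [/eqP->|xr]; first lia.
have := IH x xr; lia.
Qed.

Lemma first_fail (Q : int -> bool) (n : nat) t0 : Q t0 -> ~~ Q (t0 + n%:Z) ->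
  exists hi, t0 <= hi /\ (forall k, t0 <= k <= hi -> Q k) /\ ~~ Q (hi + 1).
Proof.
elim: n t0 => [|n IH] t0 Q0; first by rewrite addr0 Q0.
move=> Qn.
case: (boolP (Q (t0 + 1))) => Q1.
  have Qn' : ~~ Q (t0 + 1 + n%:Z) by have -> : t0 + 1 + n%:Z = t0 + n.+1%:Z by lia.
  case: (IH _ Q1 Qn') => hi [h1 [h2 h3]]; exists hi; split; first lia.
  split=> // k hk; case: (boolP (k == t0)) => [/eqP->//|kn]; apply: h2; lia.
exists t0; split=> //; split=> // k hk; have -> : k = t0 by lia.
by [].
Qed.

Section Geo.
Variables (d : axis) (K : csys d).
Local Notation ct := (ct K).
Local Notation cl := (cl K).
Local Notation cu := (cu K).

Definition btw (a b c : int) : Prop := (a <= b <= c) \/ (c <= b <= a).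

Lemma line_walk (S : vertex -> Prop) (n : nat) x y : cl y = cl x ->
  (ct y = ct x + n%:Z \/ ct x = ct y + n%:Z) ->
  (forall w, cl w = cl x -> btw (ct x) (ct w) (ct y) -> S w) ->
  exists t, walk S (adj_axis d) x t /\ last x t = y /\ size t = n /\
    (forall w, w \in t -> cl w = cl x /\ btw (ct x) (ct w) (ct y)).
Proof.
elim: n x => [|n IH] x Hl Ht HS.
  exists [::]; split=> //; split=> //.
  by rewrite /= -(cu_K K x) -(cu_K K y) Hl; congr cu; lia.
have [Hup|Hdn] : ct y = ct x + n.+1%:Z \/ ct x = ct y + n.+1%:Z by [].
- pose x' := cu (ct x + 1) (cl x).
  have cx' : ct x' = ct x + 1 by rewrite ct_u.
  have lx' : cl x' = cl x by rewrite cl_u.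
  case: (IH x'); first by rewrite lx'.
  + lia.
  + by move=> w; rewrite lx' => H1 H2; apply: HS => //; rewrite /btw in H2 *; lia.
  move=> t [W [L [Sz M]]].
  exists (x' :: t); split; [ | split; [ by rewrite /= L | split; [ by rewrite /= Sz | ] ] ].
    split; first by apply/(axE K); lia.
    by split=> //; apply: HS => //; rewrite /btw; lia.
  move=> w; rewrite inE => /orP [/eqP->|/M]; first by split=> //; rewrite /btw; lia.
  by rewrite lx' /btw; lia.
- pose x' := cu (ct x - 1) (cl x).
  have cx' : ct x' = ct x - 1 by rewrite ct_u.
  have lx' : cl x' = cl x by rewrite cl_u.
  case: (IH x'); first by rewrite lx'.
  + lia.
  + by move=> w; rewrite lx' => H1 H2; apply: HS => //; rewrite /btw in H2 *; lia.
  move=> t [W [L [Sz M]]].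
  exists (x' :: t); split; [ | split; [ by rewrite /= L | split; [ by rewrite /= Sz | ] ] ].
    split; first by apply/(axE K); lia.
    by split=> //; apply: HS => //; rewrite /btw; lia.
  move=> w; rewrite inE => /orP [/eqP->|/M]; first by split=> //; rewrite /btw; lia.
  by rewrite lx' /btw; lia.
Qed.

Lemma walk_tau (S : vertex -> Prop) a s : walk S adj a s ->
  ct (last a s) - ct a <= (size s)%:Z /\ ct a - ct (last a s) <= (size s)%:Z.
Proof.
elim: s a => [|b s IH] a /=; first by move=> _; lia.
case=> [/(adjE K) Hab [_ W]]; have := IH b W; rewrite /step in Hab; lia.
Qed.



Lemma portal_char (X P : {fset vertex}) x0 : x0 \in X ->
  (forall y, y \in P <-> connected_in (inX X) (adj_axis d) x0 y) ->
  exists lo hi, (forall y, y \in P <-> (cl y = cl x0 /\ lo <= ct y <= hi)) /\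
    cu (lo - 1) (cl x0) \notin X /\ cu (hi + 1) (cl x0) \notin X /\
    (forall y, cl y = cl x0 -> lo <= ct y <= hi -> y \in X).
Proof.
move=> x0X HP; set c := cl x0.
case: (bound_gen ct X) => B HB.
case: (bound_gen (fun v => - ct v) X) => B' HB'.
have hx0 : cu (ct x0) c = x0 by rewrite /c cu_K.
have B0 : ct x0 < B by apply: HB.
have B0' : - ct x0 < B' by apply: (HB' x0).
case: (@first_fail (fun k => cu k c \in X) (absz (B - ct x0)) (ct x0)).
- by rewrite /= hx0.
- apply/negP => /HB; rewrite ct_u; lia.
move=> hi [hi0 [hiX hi1]].
case: (@first_fail (fun k => cu (- k) c \in X) (absz (B' + ct x0)) (- ct x0)).
- by rewrite /= opprK hx0.
- apply/negP => /HB'; rewrite ct_u; lia.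
move=> hj [hj0 [hjX hj1]].
have inXX : forall y, cl y = c -> - hj <= ct y <= hi -> y \in X.
  move=> y yc hy; rewrite -(cu_K K y) yc.
  case: (lerP (ct x0) (ct y)) => hc; first by apply: (hiX (ct y)); lia.
  have := hjX (- ct y); rewrite opprK; apply; lia.
have nL : cu (- hj - 1) c \notin X by have -> : - hj - 1 = - (hj + 1) by lia.
exists (- hj), hi; split; last by split=> //; split.
move=> y; rewrite HP; split.
- case=> t [_ [W L]]; rewrite -L {L}.
  have gen : forall z, walk (inX X) (adj_axis d) z t -> cl z = c /\ - hj <= ct z <= hi ->
     cl (last z t) = c /\ - hj <= ct (last z t) <= hi.
    2: by apply: gen => //; split=> //; lia.
  elim: t {W} => [|b t IH] z //= [/(axE K) Hzb [bX W]] Hz.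
  apply: IH => //; split; first lia.
  have Hb1 : ct b <> hi + 1.
    move=> E; move: bX; rewrite /inX -(cu_K K b) E.
    have -> : cl b = c by lia.
    by rewrite (negbTE hi1).
  have Hb2 : ct b <> - hj - 1.
    move=> E; move: bX; rewrite /inX -(cu_K K b) E.
    have -> : cl b = c by lia.
    by rewrite (negbTE nL).
  lia.
- case=> yc hy.
  case: (@line_walk (inX X) (absz (ct y - ct x0)) x0 y) => //; first lia.
    by move=> w wc; rewrite /btw => hw; apply: inXX; rewrite ?wc //; lia.
  by move=> t [W [L _]]; exists t.
Qed.

Local Notation psi := (psi K).
Local Notation cr := (cr K).

Lemma psi_eq_pt (Q : vertex -> Prop) l t1 t2 a s : Q a -> (forall z, z \in s -> Q z) ->
  (forall a b, Q a -> Q b -> cr l t1 a b = cr l t2 a b) -> psi l t1 a s = psi l t2 a s.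
Proof.
elim: s a => [|b s IH] a //= Qa Qs H.
rewrite H //; last by apply: Qs; rewrite inE eqxx.
rewrite IH //; first by apply: Qs; rewrite inE eqxx.
by move=> z zs; apply: Qs; rewrite inE zs orbT.
Qed.

Lemma out_arith (z lo hi : int) : ~ (lo <= z <= hi) -> z <> lo - 1 -> z <> hi + 1 ->
  z <= lo - 2 \/ hi + 2 <= z.
Proof. lia. Qed.

Definition crI (la lb ta tb l t : int) : int :=
  (if (la == l) && (lb == l + 1) && (t < ta) then 1 else 0) -
  (if (lb == l) && (la == l + 1) && (t < tb) then 1 else 0).

Lemma crE l t a b : cr l t a b = crI (cl a) (cl b) (ct a) (ct b) l t.
Proof. by []. Qed.

Lemma crI_out la lb ta tb l t1 t2 lo hi :
  (la = l -> ta <= lo - 2 \/ hi + 2 <= ta) -> (lb = l -> tb <= lo - 2 \/ hi + 2 <= tb) ->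
  lo - 1 <= t1 <= hi + 1 -> lo - 1 <= t2 <= hi + 1 ->
  crI la lb ta tb l t1 = crI la lb ta tb l t2.
Proof. rewrite /crI => ha hb h1 h2; repeat case: ifP; lia. Qed.

Lemma crI_zero la lb ta tb l t : la <> l -> la <> l + 1 -> crI la lb ta tb l t = 0.
Proof. rewrite /crI => h1 h2; repeat case: ifP; lia. Qed.

Lemma crI_up la lb ta tb l t : la = l -> lb = l + 1 ->
  crI la lb ta tb l t = if t < ta then 1 else 0.
Proof. rewrite /crI => h1 h2; repeat case: ifP; lia. Qed.

Lemma crI_down la lb ta tb l t : la = l + 1 -> lb = l ->
  crI la lb ta tb l t = - (if t < tb then 1 else 0).
Proof. rewrite /crI => h1 h2; repeat case: ifP; lia. Qed.

Lemma step_down ta la tb lb : step ta la tb lb -> la = lb + 1 -> tb = ta \/ tb = ta + 1.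
Proof. rewrite /step; lia. Qed.

Lemma step_same ta la tb lb : step ta la tb lb -> la = lb -> tb = ta + 1 \/ ta = tb + 1.
Proof. rewrite /step; lia. Qed.

Lemma step_lev ta la tb lb : step ta la tb lb -> la = lb \/ la = lb + 1 \/ lb = la + 1.
Proof. rewrite /step; lia. Qed.

Lemma core (X P : {fset vertex}) x0 x y p q (w' : seq vertex) :
  no_holes X -> x0 \in X ->
  (forall z, z \in P <-> connected_in (inX X) (adj_axis d) x0 z) ->
  p \in P -> q \in P -> adj x p -> adj y q -> x \in X -> y \in X -> x \notin P -> y \notin P ->
  walk (fun z => z \in X /\ z \notin P) adj x w' -> last x w' = y ->
  cl x = cl p + 1 ->
  cl y = cl q + 1 /\ (forall z, cl z = cl x -> btw (ct x) (ct z) (ct y) -> z \in X).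
Proof.
move=> NH x0X HP pP qP axp ayq xX yX xP yP W' L' hx.
case: (portal_char x0X HP) => lo [hi [HPc [nL [nR HI]]]].
have [pc pr] := (HPc p).1 pP.
have [qc qr] := (HPc q).1 qP.
have out : forall z, z \in X -> z \notin P -> cl z = cl x0 -> ct z <= lo - 2 \/ hi + 2 <= ct z.
  move=> z zX zP zc; apply: out_arith.
  - by move=> h; move: zP; rewrite (HPc z).2.
  - by move=> E; move: zX; rewrite -(cu_K K z) E zc (negbTE nL).
  - by move=> E; move: zX; rewrite -(cu_K K z) E zc (negbTE nR).
have qX : q \in X by apply: HI.
case: (@line_walk (inX X) (absz (ct p - ct q)) q p).
- by rewrite pc qc.
- clear; lia.
- by move=> z zc hz; apply: HI; rewrite /btw in hz; [rewrite zc qc | clear -hz pr qr; lia].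
move=> lq [Wq [Lq [_ Mq]]].
set Cs := w' ++ q :: (lq ++ [:: x]).
have WC : walk (inX X) adj x Cs.
  rewrite /Cs walk_cat L' /=; split.
    by apply: (walk_E W') => z /(walk_mem W') [].
  split=> //; split=> //.
  rewrite walk_cat Lq /=; split; first exact: walk_Emono (@axis_adj d) Wq.
  by split; [apply: adj_sym | split].
have LC : last x Cs = x by rewrite /Cs last_cat /= last_cat.
have MC : forall z, z \in x :: Cs -> z \in X.
  by move=> z; rewrite inE => /orP [/eqP->//|zC]; exact: (walk_mem WC zC).
have Z : forall z, z \notin X -> psi (cl z) (ct z) x Cs = 0.
  by move=> z zX; apply: (psi_zero K NH WC LC MC zX).
have dec : forall l t, psi l t x Cs = psi l t x w' + cr l t y q + psi l t q lq + cr l t p x.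
  by move=> l t; rewrite /Cs psi_cat L' /= psi_cat Lq /= addr0 !addrA.
have flat : forall t, psi (cl x0) t q lq = 0.
  move=> t; apply: psi_flat => z; rewrite inE => /orP [/eqP->|/Mq [zc _]].
    by rewrite qc; clear; lia.
  by rewrite zc qc; clear; lia.
have wpt : forall t1 t2, lo - 1 <= t1 <= hi + 1 -> lo - 1 <= t2 <= hi + 1 ->
    psi (cl x0) t1 x w' = psi (cl x0) t2 x w'.
  move=> t1 t2 h1 h2; apply: (@psi_eq_pt (fun z => z \in X /\ z \notin P)).
  - by split.
  - exact: walk_mem W'.
  - move=> a b [aX aP] [bX bP]; rewrite !crE.
    by apply: (crI_out (out a aX aP) (out b bX bP)).
have sx := step_down ((adjE K x p).1 axp) hx.
have z1 := Z _ nL; have z2 := Z _ nR; rewrite !cl_u !ct_u in z1 z2.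
have c3 : cr (cl x0) (lo - 1) p x = 1.
  rewrite crE crI_up ?pc //; last by rewrite hx pc.
  by case: ifP => //; clear -pr; lia.
have c4 : cr (cl x0) (hi + 1) p x = 0.
  rewrite crE crI_up ?pc //; last by rewrite hx pc.
  by case: ifP => //; clear -pr; lia.
have W0 := wpt (lo - 1) (hi + 1).
have F1 := flat (lo - 1); have F2 := flat (hi + 1).
have D1 := dec (cl x0) (lo - 1); have D2 := dec (cl x0) (hi + 1).
have cy : cl y = cl q + 1.
  have yn : cl y <> cl q.
    move=> E; have := out y yX yP; rewrite E qc => /(_ erefl).
    have := step_same ((adjE K y q).1 ayq) E.
    by clear -qr; lia.
  case: (boolP (cl y == cl q + 1)) => [/eqP//|/eqP ne].
  exfalso.
  have c1 : cr (cl x0) (lo - 1) y q = 0 by rewrite crE crI_zero // -qc.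
  have c2 : cr (cl x0) (hi + 1) y q = 0 by rewrite crE crI_zero // -qc.
  have W1 : psi (cl x0) (lo - 1) x w' = psi (cl x0) (hi + 1) x w'.
    by apply: W0; clear -pr; lia.
  clear -D1 D2 W1 F1 F2 z1 z2 c1 c2 c3 c4; lia.
split=> // z zc hz; case: (boolP (z \in X)) => // zX; exfalso.
have zx : ct z <> ct x.
  by move=> E; move: zX; rewrite -(cu_K K z) E zc cu_K xX.
have zy : ct z <> ct y.
  by move=> E; move: zX; rewrite -(cu_K K z) E zc hx pc -qc -cy cu_K yX.
have h0 : psi (cl x0) (ct z) x Cs = 0.
  have e : cl x0 + 1 = cl z by rewrite zc hx pc.
  rewrite (psi_V WC LC) e; first exact: Z.
  move=> w /MC wX E; move: zX; suff -> : z = w by rewrite wX.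
  by rewrite E; symmetry; apply: cuE => //; rewrite e.
have sy := step_down ((adjE K y q).1 ayq) cy.
have cpx : forall t, cr (cl x0) t p x = if t < ct p then 1 else 0.
  by move=> t; rewrite crE crI_up //; rewrite ?hx pc.
have cyq : forall t, cr (cl x0) t y q = - (if t < ct q then 1 else 0).
  by move=> t; rewrite crE crI_down //; rewrite ?cy qc.
have ca : cr (cl x0) (ct z) p x + cr (cl x0) (ct z) y q <> 0.
  rewrite cpx cyq.
  rewrite /btw in hz; move: sx sy hz zx zy; clear.
  by repeat case: ifP; lia.
have cb : cr (cl x0) (hi + 1) p x + cr (cl x0) (hi + 1) y q = 0.
  rewrite cpx cyq.
  by move: pr qr; clear; repeat case: ifP; lia.
have D3 := dec (cl x0) (ct z); have F3 := flat (ct z).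
have W1 : psi (cl x0) (ct z) x w' = psi (cl x0) (hi + 1) x w'.
  apply: wpt; last by clear -pr; lia.
  rewrite /btw in hz; move: sx sy hz zx zy pr qr; clear; lia.
clear -D2 D3 W1 F2 F3 h0 z2 ca cb; lia.
Qed.


Lemma final_core (X P : {fset vertex}) x0 u v s1 p m y n w' :
  no_holes X -> x0 \in X ->
  (forall z, z \in P <-> connected_in (inX X) (adj_axis d) x0 z) ->
  walk (inX X) adj u (s1 ++ p :: m ++ y :: n) ->
  (forall t, path_in (inX X) adj u t v -> (size (s1 ++ p :: m ++ y :: n) <= size t)%N) ->
  u \in X -> last y n = v ->
  p \in P -> last p m \in P -> last u s1 \notin P -> y \notin P ->
  walk (fun z => z \in X /\ z \notin P) adj (last u s1) w' -> last (last u s1) w' = y ->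
  cl (last u s1) = cl p + 1 -> False.
Proof.
move=> NH x0X HP W SH uX Ln pP qP xP yP W' L' hx.
move: W; rewrite walk_cat => [[W1 /= [axp [pX]]]].
rewrite walk_cat => [[W2 /= [aqy [yX W3]]]].
have xX : last u s1 \in X.
  have := mem_last u s1; rewrite inE => /orP [/eqP->//|xs].
  exact: (walk_mem W1 xs).
have [cy fill] := core NH x0X HP pP qP axp (adj_sym aqy) xX yX xP yP W' L' hx.
case: (portal_char x0X HP) => lo [hi [HPc _]].
have [pc _] := (HPc p).1 pP.
have [qc _] := (HPc _).1 qP.
have cyx : cl y = cl (last u s1) by rewrite cy hx pc qc.
case: (@line_walk (inX X) (absz (ct y - ct (last u s1))) (last u s1) y cyx).
- clear; lia.
- by move=> z zc hz; apply: fill.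
move=> lt [Wl [Ll [Sl _]]].
have := SH (s1 ++ lt ++ n).
have sx := step_down ((adjE K _ _).1 axp) hx.
have sy := step_down ((adjE K _ _).1 (adj_sym aqy)) cy.
have tb := walk_tau W2.
have Pt : path_in (inX X) adj u (s1 ++ lt ++ n) v.
  split=> //; split.
    rewrite walk_cat; split=> //; rewrite walk_cat Ll; split=> //.
    exact: walk_Emono (@axis_adj d) Wl.
  by rewrite !last_cat Ll.
move=> /(_ Pt); rewrite !size_cat /= size_cat /= Sl.
move: sx sy tb; clear; lia.
Qed.

End Geo.
End Dev.

Local Open Scope fset_scope.

Theorem mainTheorem4 (X P : {fset vertex}) (u v : vertex) (s : seq vertex) :
  GX_connected X -> no_holes X -> is_portal X P ->
  u \in X -> u \notin P -> v \in X -> v \notin P ->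
  shortest_path X u s v ->
  ((exists w, w \in u :: s /\ w \in P) <->
   ~ connected_in (fun x => x \in X /\ x \notin P) adj u v).
Proof.
move=> GC NH [dd [x0 [x0X HP]]] uX uP vX vP [[_ [Ws Ls]] SH]; split.
- move=> [w [wL wP]] Hc.
  have hs : has (fun w => w \in P) s.
    apply/hasP; exists w => //; move: wL; rewrite inE => /orP [/eqP E|//].
    by move: uP; rewrite -E wP.
  case: (split_first uP hs) => s1 [p [r [Es [pP Hs1]]]].
  have Lr : last p r \notin P by move: Ls; rewrite Es last_cat /= => ->.
  case: (split_last pP Lr) => m [y [n [Er [qP Hn]]]].
  rewrite {}Er in Es; subst s.
  move: (Ws); rewrite walk_cat => [[W1 /= [axp [pX]]]].
  rewrite walk_cat => [[W2 /= [aqy [yX W3]]]].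
  have Ln : last y n = v by move: Ls; rewrite last_cat /= last_cat.
  have xin : last u s1 \in u :: s1 by apply: mem_last.
  have xX : last u s1 \in X.
    move: xin; rewrite inE => /orP [/eqP->//|xs]; exact: (walk_mem W1 xs).
  have xP : last u s1 \notin P by apply: Hs1.
  have yP : y \notin P by apply: Hn; rewrite inE eqxx.
  have c1 : connected_in (fun x => x \in X /\ x \notin P) adj u (last u s1).
    exists s1; split=> //; split=> //; apply: (walk_E W1) => z zs; split.
      exact: (walk_mem W1 zs).
    by apply: Hs1; rewrite inE zs orbT.
  have c2 : connected_in (fun x => x \in X /\ x \notin P) adj y v.
    exists n; split=> //; split=> //; apply: (walk_E W3) => z zs; split.
      exact: (walk_mem W3 zs).
    by apply: Hn; rewrite inE zs orbT.
  have c3 : connected_in (fun x => x \in X /\ x \notin P) adj (last u s1) y.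
    apply: (conn_trans (conn_sym adj_sym c1)).
    exact: (conn_trans Hc (conn_sym adj_sym c2)).
  case: c3 => w' [_ [W' L']].
  pose K := csD dd.
  case: (step_lev ((adjE K _ _).1 axp)) => [E|[E|E]].
  + move/negP: xP; apply; apply/(HP _).2.
    apply: (conn_trans ((HP p).1 pP)).
    exists [:: last u s1]; split; first exact: pX.
    split; last by [].
    split; last by split.
    apply/(axE K); split=> //.
    exact: (step_same ((adjE K _ _).1 (adj_sym axp))).

  + exact: (final_core NH x0X HP Ws SH uX Ln pP qP xP yP W' L' E).
  + apply: (@final_core _ (csR K) X P x0 u v s1 p m y n w' NH x0X HP Ws SH uX Ln pP qP xP yP W' L').
    change ((- cl K (last u s1) = - cl K p + 1)%R); rewrite E; clear; lia.
- move=> Hn; case: (boolP (has (fun w => w \in P) (u :: s))) => [/hasP [w wL wP] | hn].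
    by exists w.
  exfalso; apply: Hn; exists s; split; first by split.
  split=> //; apply: (walk_E Ws) => z zs; split; first exact: (walk_mem Ws zs).
  by move/hasPn: hn; apply; rewrite inE zs orbT.
Qed.
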